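(* Let $m\ge1$, $b_1,\dots,b_m>0$, $\sigma_1,\dots,\sigma_m\ge0$, and $\phi(\lambda)=\frac12\lambda^2-\sum_{j=1}^mb_j\sqrt{\lambda^2+\sigma_j}$ for $\lambda\ge0$. Then: (1) $\phi$ has at most one critical point $\lambda_0\in(0,\infty)$; if it exists, $\phi'(\lambda)>0$ for $\lambda>\lambda_0$ and $\phi'(\lambda)<0$ for $0<\lambda<\lambda_0$, $\phi''(\lambda)>0$ for $\lambda>\lambda_0$, and $\phi''$ has at most one zero in $(0,\lambda_0)$. If no such $\lambda_0$ exists, then $\phi''(\lambda)\ge0$ for all $\lambda\ge0$. (2) $\bigl(\phi''(\lambda)/\phi'(\lambda)^3\bigr)'\le0$ for all $\lambda\ne\lambda_0$ (i.e. at all $\lambda>0$ where $\phi'(\lambda)\ne0$). (3) If $\lambda_0>0$ exists, then $\phi'(\lambda)=\lambda\int_{\lambda_0}^{\lambda}\sum_{j=1}^m\frac{b_js}{(s^2+\sigma_j)^{3/2}}\,ds$ for all $\lambda>0$; if it does not exist, then $\phi'(\lambda)\ge\lambda\int_0^\lambda\sum_{j=1}^m\frac{b_js}{(s^2+\sigma_j)^{3/2}}\,ds$ for all $\lambda>0$. *)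

(* Defs.v *)
From Stdlib Require Import Reals.
From Coquelicot Require Import Coquelicot.
Open Scope R_scope.

(* sumR n f = f 0 + f 1 + ... + f (n-1)  (indices j = 0..n-1 stand for 1..m) *)
Fixpoint sumR (n : nat) (f : nat -> R) : R :=
  match n with
  | O => 0
  | S k => sumR k f + f k
  end.

Definition phi (m : nat) (b sigma : nat -> R) (x : R) : R :=
  / 2 * x ^ 2 - sumR m (fun j => b j * sqrt (x ^ 2 + sigma j)).

Definition phi1 (m : nat) (b sigma : nat -> R) : R -> R :=
  Derive (phi m b sigma).
Definition phi2 (m : nat) (b sigma : nat -> R) : R -> R :=
  Derive (phi1 m b sigma).

Definition integrand (m : nat) (b sigma : nat -> R) (s : R) : R :=
  sumR m (fun j => b j * s / (sqrt (s ^ 2 + sigma j)) ^ 3).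

(* Main.v *)
Require Import Defs.
From Stdlib Require Import Reals Lra Lia Classical.
From Coquelicot Require Import Coquelicot.
Open Scope R_scope.

Lemma sumR_ext n f g : (forall j, (j < n)%nat -> f j = g j) -> sumR n f = sumR n g.
Proof. induction n; simpl; intros H; auto. rewrite IHn by (intros; apply H; lia). rewrite H by lia. auto. Qed.

Lemma sumR_le n f g : (forall j, (j < n)%nat -> f j <= g j) -> sumR n f <= sumR n g.
Proof. induction n; simpl; intros H; [lra|]. assert (H1 := H n ltac:(lia)). assert (sumR n f <= sumR n g) by (apply IHn; intros; apply H; lia). lra. Qed.

Lemma sumR_lt n f g : (1 <= n)%nat -> (forall j, (j < n)%nat -> f j < g j) -> sumR n f < sumR n g.
Proof. intros Hn H. destruct n; [lia|]. simpl. assert (H1 := H n ltac:(lia)).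
 assert (sumR n f <= sumR n g) by (apply sumR_le; intros; apply Rlt_le, H; lia). lra. Qed.

Lemma sumR_lt2 n f g j0 : (j0 < n)%nat -> f j0 < g j0 -> (forall j, (j < n)%nat -> f j <= g j) -> sumR n f < sumR n g.
Proof. induction n; simpl; intros Hj Hl H; [lia|].
 destruct (Nat.eq_dec j0 n).
 - subst. assert (sumR n f <= sumR n g) by (apply sumR_le; intros; apply H; lia). lra.
 - assert (sumR n f < sumR n g) by (apply IHn; [lia|auto|intros; apply H; lia]).
   assert (H1 := H n ltac:(lia)). lra. Qed.

Lemma sumR_lin n u v f g : sumR n (fun j => u * f j + v * g j) = u * sumR n f + v * sumR n g.
Proof. induction n; simpl; [ring|]. rewrite IHn. ring. Qed.

Lemma sumR_nonneg n f : (forall j, (j < n)%nat -> 0 <= f j) -> 0 <= sumR n f.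
Proof. intros H. replace 0 with (sumR n (fun _ => 0)). apply sumR_le; auto.
 clear H; induction n; simpl; auto; rewrite IHn; ring. Qed.

Lemma sumR_ge_term n f j0 : (j0 < n)%nat -> (forall j, (j < n)%nat -> 0 <= f j) -> f j0 <= sumR n f.
Proof. induction n; simpl; intros Hj H; [lia|].
 destruct (Nat.eq_dec j0 n).
 - subst. assert (0 <= sumR n f) by (apply sumR_nonneg; intros; apply H; lia). lra.
 - assert (f j0 <= sumR n f) by (apply IHn; [lia| intros; apply H; lia]).
   assert (H1 := H n ltac:(lia)). lra. Qed.

Lemma is_derive_sumR n (f : nat -> R -> R) f' x :
  (forall j, (j < n)%nat -> is_derive (f j) x (f' j)) ->
  is_derive (fun y => sumR n (fun j => f j y)) x (sumR n f').
Proof. induction n; simpl; intros H.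
 - apply (is_derive_const 0).
 - apply (is_derive_plus (fun y => sumR n (fun j => f j y)) (f n)).
   apply IHn; intros; apply H; lia. apply H; lia. Qed.

Lemma d_sq b s x : 0 < x^2 + s -> is_derive (fun y => b * sqrt (y^2 + s)) x (b * x / sqrt (x^2+s)).
Proof. intros H. auto_derive. lra. assert (0 < sqrt (x^2+s)) by (apply sqrt_lt_R0; lra). replace (x*(x*1)) with (x^2) by ring. field. lra. Qed.
Lemma div_nonneg a c : 0 <= a -> 0 < c -> 0 <= a / c.
Proof. intros; unfold Rdiv; apply Rmult_le_pos; auto. left; apply Rinv_0_lt_compat; auto. Qed.

Lemma sumR_scal n c f : sumR n (fun j => c * f j) = c * sumR n f.
Proof. induction n; simpl; [ring|]. rewrite IHn. ring. Qed.

Lemma sumR_zero n : sumR n (fun _ => 0) = 0.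
Proof. induction n; simpl; [ring|]. rewrite IHn. ring. Qed.

Ltac rset x s :=
  let r := fresh "r" in
  let Hr := fresh "Hr" in let E := fresh "E" in
  assert (Hr : 0 < sqrt (x^2+s)) by (apply sqrt_lt_R0; lra);
  assert (E : sqrt (x^2+s) * sqrt(x^2+s) = x^2 + s) by (apply sqrt_sqrt; lra);
  set (r := sqrt (x^2+s)) in *; clearbody r.

Lemma le_by_diff a c N k : 0 < k -> 0 <= N -> c - a = N / k -> a <= c.
Proof. intros Hk HN E. assert (0 <= N / k) by (apply div_nonneg; auto). lra. Qed.

Lemma e_P1 b0 s x : 0 < x^2 + s -> b0 * x / sqrt (x^2+s) = x * (b0 / sqrt (x^2+s)).
Proof. intros H. rset x s. field. lra. Qed.

Lemma e_P2 b0 s x : 0 < x^2 + s ->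
  b0 * s / sqrt (x^2+s) ^ 3 = 1 * (b0 / sqrt (x^2+s)) + (-x) * (b0 * x / sqrt (x^2+s) ^ 3).
Proof. intros H. rset x s. replace s with (r*r - x^2) at 1 by lra. field. lra. Qed.

Lemma e_P3 b0 s x : 0 < x^2 + s ->
  x * (3 * b0 * s * x / sqrt (x^2+s) ^ 5) = 3 * (b0 * s / sqrt (x^2+s) ^ 3) + (-3) * (b0 * s ^ 2 / sqrt (x^2+s) ^ 5).
Proof. intros H. rset x s. replace s with (r*r - x^2) by lra. field. lra. Qed.

Lemma i_SG b0 s x : 0 < b0 -> 0 <= s -> 0 < x^2 + s -> b0 * s / sqrt (x^2+s) ^ 3 <= b0 / sqrt (x^2+s).
Proof. intros Hb Hs H. rset x s. apply (le_by_diff _ _ (b0 * (r*r - s)) (r^3)).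
 apply pow_lt; auto. apply Rmult_le_pos; [lra|]. assert (0 <= x^2) by (rewrite <- Rsqr_pow2; apply Rle_0_sqr). lra.
 field. lra. Qed.

Lemma i_QS b0 s x : 0 < b0 -> 0 <= s -> 0 < x^2 + s -> b0 * s ^ 2 / sqrt (x^2+s) ^ 5 <= b0 * s / sqrt (x^2+s) ^ 3.
Proof. intros Hb Hs H. rset x s. apply (le_by_diff _ _ (b0 * s * (r*r - s)) (r^5)).
 apply pow_lt; auto. apply Rmult_le_pos; [apply Rmult_le_pos; lra|]. assert (0 <= x^2) by (rewrite <- Rsqr_pow2; apply Rle_0_sqr). lra.
 field. lra. Qed.

Lemma i_cQ c b0 s x : 0 < b0 -> 0 <= s -> 0 < x^2 + s ->
  2 * c * (b0 * s / sqrt (x^2+s) ^ 3) + (- c ^ 2) * (b0 / sqrt (x^2+s)) <= b0 * s ^ 2 / sqrt (x^2+s) ^ 5.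
Proof. intros Hb Hs H. rset x s. apply (le_by_diff _ _ (b0 * (s - c * (r*r)) ^ 2) (r^5)).
 apply pow_lt; auto. apply Rmult_le_pos; [lra|]. rewrite <- Rsqr_pow2; apply Rle_0_sqr.
 field. lra. Qed.

Lemma i_dec b0 s x y : 0 < b0 -> 0 <= s -> 0 <= x -> x < y -> 0 < x^2 + s ->
  b0 / sqrt (y^2+s) < b0 / sqrt (x^2+s).
Proof. intros Hb Hs Hx Hxy H.
 assert (x^2 < y^2) by nra.
 assert (sqrt (x^2+s) < sqrt (y^2+s)) by (apply sqrt_lt_1; lra).
 assert (0 < sqrt (x^2+s)) by (apply sqrt_lt_R0; lra).
 unfold Rdiv. apply Rmult_lt_compat_l; auto. apply Rinv_lt_contravar; auto. nra. Qed.

Lemma i_decS b0 s x y : 0 < b0 -> 0 <= s -> 0 <= x -> x < y -> 0 < x^2 + s ->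
  b0 * s / sqrt (y^2+s) ^ 3 <= b0 * s / sqrt (x^2+s) ^ 3 /\
  (0 < s -> b0 * s / sqrt (y^2+s) ^ 3 < b0 * s / sqrt (x^2+s) ^ 3).
Proof. intros Hb Hs Hx Hxy H.
 assert (x^2 < y^2) by nra.
 assert (sqrt (x^2+s) < sqrt (y^2+s)) by (apply sqrt_lt_1; lra).
 assert (0 < sqrt (x^2+s)) by (apply sqrt_lt_R0; lra).
 set (r1 := sqrt (x^2+s)) in *. set (r2 := sqrt (y^2+s)) in *.
 assert (r1^3 < r2^3) by (assert (0 < r1*r1) by nra; assert (r1*r1 < r2*r2) by nra; simpl; nra).
 assert (0 < r1^3) by (apply pow_lt; lra).
 assert (/ r2^3 < / r1^3) by (apply Rinv_lt_contravar; nra).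
 unfold Rdiv. split.
 - apply Rmult_le_compat_l. apply Rmult_le_pos; lra. lra.
 - intros. apply Rmult_lt_compat_l. apply Rmult_lt_0_compat; lra. lra. Qed.

Lemma i_bnd b0 s X : 0 < b0 -> 0 <= s -> 0 < X -> b0 / sqrt (X^2+s) <= / X * b0.
Proof. intros Hb Hs HX.
 assert (0 <= X^2) by (rewrite <- Rsqr_pow2; apply Rle_0_sqr).
 assert (X <= sqrt (X^2+s)). { rewrite <- (sqrt_pow2 X) at 1 by lra. apply sqrt_le_1; lra. }
 unfold Rdiv. rewrite Rmult_comm. apply Rmult_le_compat_r; [lra|]. apply Rinv_le_contravar; lra. Qed.

Lemma i_int b0 s x : 0 < b0 -> 0 <= x -> 0 < x^2 + s -> 0 <= b0 * x / sqrt (x^2+s) ^ 3.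
Proof. intros. apply div_nonneg. apply Rmult_le_pos; lra. apply pow_lt, sqrt_lt_R0; lra. Qed.
Lemma sumR_opp n f : sumR n (fun j => - f j) = - sumR n f.
Proof. induction n; simpl; [ring|]. rewrite IHn. ring. Qed.

Section S.
Variables (m : nat) (b sigma : nat -> R).
Hypothesis hm : (1 <= m)%nat.
Hypothesis hb : forall j, (j < m)%nat -> 0 < b j.
Hypothesis hs : forall j, (j < m)%nat -> 0 <= sigma j.

Definition G x := sumR m (fun j => b j / sqrt (x^2 + sigma j)).
Definition P1 x := x - sumR m (fun j => b j * x / sqrt (x^2 + sigma j)).
Definition SS x := sumR m (fun j => b j * sigma j / sqrt (x^2 + sigma j) ^ 3).
Definition P2 x := 1 - SS x.
Definition Qs x := sumR m (fun j => b j * sigma j ^ 2 / sqrt (x^2 + sigma j) ^ 5).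
Definition P3 x := sumR m (fun j => 3 * b j * sigma j * x / sqrt (x^2 + sigma j) ^ 5).

Definition good x := 0 < x \/ (forall j, (j < m)%nat -> 0 < sigma j).

Lemma good_pos x : good x -> forall j, (j < m)%nat -> 0 < x^2 + sigma j.
Proof. intros [H|H] j Hj. assert (0 < x^2) by (apply pow_lt; lra). generalize (hs j Hj); lra.
 assert (0 <= x^2) by (rewrite <- Rsqr_pow2; apply Rle_0_sqr). generalize (H j Hj); lra. Qed.

Lemma good_loc x : good x -> locally x good.
Proof. intros [H|H].
 - exists (mkposreal x H). intros y Hy. left. unfold ball in Hy; simpl in Hy.
   unfold AbsRing_ball, abs, minus, plus, opp in Hy; simpl in Hy.
   apply Rabs_lt_between in Hy. lra.
 - exists (mkposreal 1 Rlt_0_1). intros y _. right. auto. Qed.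

Ltac sqtac x s H :=
  try replace (x*(x*1)) with (x^2) by ring;
  let r := fresh "r" in
  let Hr := fresh "Hr" in let E := fresh "E" in
  assert (Hr : 0 < sqrt (x^2+s)) by (apply sqrt_lt_R0; lra);
  assert (E : sqrt (x^2+s) * sqrt(x^2+s) = x^2 + s) by (apply sqrt_sqrt; lra);
  set (r := sqrt (x^2+s)) in *; clearbody r;
  lazymatch goal with
  | |- _ /\ _ => repeat split; try lra; try tauto; apply Rgt_not_eq, Rlt_gt; repeat apply Rmult_lt_0_compat; lra
  | _ => replace s with (r*r - x^2) by lra; field; lra
  end.

Lemma t1 b0 s x : 0 < x^2 + s -> is_derive (fun y => b0 * y / sqrt (y^2 + s)) x (b0 * s / sqrt (x^2+s) ^ 3).
Proof. intros H. auto_derive; sqtac x s H. Qed.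

Lemma t2 b0 s x : 0 < x^2 + s -> is_derive (fun y => b0 * s / sqrt (y^2 + s) ^ 3) x (- (3 * b0 * s * x / sqrt (x^2+s) ^ 5)).
Proof. intros H. auto_derive; sqtac x s H. Qed.

Lemma t3 b0 s x : 0 < x^2 + s -> is_derive (fun y => b0 / sqrt (y^2 + s)) x (- (b0 * x / sqrt (x^2+s) ^ 3)).
Proof. intros H. auto_derive; sqtac x s H. Qed.

Lemma t4 b0 s x : 0 < x^2 + s -> ex_derive (fun y => b0 * y / sqrt (y^2 + s) ^ 3) x.
Proof. intros H. auto_derive; sqtac x s H. Qed.


Lemma dphi x : good x -> is_derive (phi m b sigma) x (P1 x).
Proof. intros Hg. unfold phi, P1.
 apply (is_derive_minus (fun y => / 2 * y ^ 2) (fun y => sumR m (fun j => b j * sqrt (y ^ 2 + sigma j)))).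
 - auto_derive; auto. field.
 - apply (is_derive_sumR m (fun j y => b j * sqrt (y ^ 2 + sigma j))).
   intros j Hj. apply d_sq. apply good_pos; auto. Qed.

Lemma dP1 x : good x -> is_derive P1 x (P2 x).
Proof. intros Hg. unfold P1, P2, SS.
 apply (is_derive_minus (fun y => y) (fun y => sumR m (fun j => b j * y / sqrt (y ^ 2 + sigma j)))).
 - auto_derive; reflexivity.
 - apply (is_derive_sumR m (fun j y => b j * y / sqrt (y ^ 2 + sigma j))).
   intros j Hj. apply t1. apply good_pos; auto. Qed.

Lemma dS x : good x -> is_derive SS x (- P3 x).
Proof. intros Hg. unfold SS, P3. rewrite <- sumR_opp.
 apply (is_derive_sumR m (fun j y => b j * sigma j / sqrt (y ^ 2 + sigma j) ^ 3)).
 intros j Hj. apply t2. apply good_pos; auto. Qed.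

Lemma dP2 x : good x -> is_derive P2 x (P3 x).
Proof. intros Hg. unfold P2. replace (P3 x) with (0 - - P3 x) by ring.
 apply (is_derive_minus (fun _ => 1) SS). auto_derive; reflexivity. apply dS; auto. Qed.

Lemma dG x : good x -> is_derive G x (- integrand m b sigma x).
Proof. intros Hg. unfold G, integrand. rewrite <- sumR_opp.
 apply (is_derive_sumR m (fun j y => b j / sqrt (y ^ 2 + sigma j))).
 intros j Hj. apply t3. apply good_pos; auto. Qed.

Lemma ex_derive_sumR n (f : nat -> R -> R) x :
  (forall j, (j < n)%nat -> ex_derive (f j) x) ->
  ex_derive (fun y => sumR n (fun j => f j y)) x.
Proof. intros H. exists (sumR n (fun j => Derive (f j) x)).
 apply is_derive_sumR. intros j Hj. apply Derive_correct. auto. Qed.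

Lemma cont_int x : good x -> continuous (integrand m b sigma) x.
Proof. intros Hg. apply (@ex_derive_continuous R_AbsRing R_NormedModule). unfold integrand.
 apply (ex_derive_sumR m (fun j y => b j * y / sqrt (y ^ 2 + sigma j) ^ 3)).
 intros j Hj. apply t4. apply good_pos; auto. Qed.

Lemma phi1_eq x : good x -> phi1 m b sigma x = P1 x.
Proof. intros Hg. unfold phi1. apply is_derive_unique, dphi; auto. Qed.

Lemma phi1_loc x : good x -> locally x (fun y => phi1 m b sigma y = P1 y).
Proof. intros Hg. apply (filter_imp good). intros; apply phi1_eq; auto. apply good_loc; auto. Qed.

Lemma phi2_eq x : good x -> phi2 m b sigma x = P2 x.
Proof. intros Hg. unfold phi2. rewrite (Derive_ext_loc _ P1) by (apply phi1_loc; auto).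
 apply is_derive_unique, dP1; auto. Qed.

Lemma phi2_loc x : good x -> locally x (fun y => phi2 m b sigma y = P2 y).
Proof. intros Hg. apply (filter_imp good). intros; apply phi2_eq; auto. apply good_loc; auto. Qed.


Lemma ball_R (x e y : R) : ball x e y <-> Rabs (y - x) < e.
Proof. unfold ball; simpl; unfold AbsRing_ball, abs, minus, plus, opp; simpl. tauto. Qed.

Lemma P1_G x : good x -> P1 x = x * (1 - G x).
Proof. intros Hg. unfold P1, G.
 rewrite (sumR_ext _ _ (fun j => x * (b j / sqrt (x^2+sigma j)))) by (intros; apply e_P1, good_pos; auto).
 rewrite sumR_scal. ring. Qed.

Lemma P2_G x : good x -> P2 x = (1 - G x) + x * integrand m b sigma x.
Proof. intros Hg. unfold P2, SS, G, integrand.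
 rewrite (sumR_ext _ _ (fun j => 1 * (b j / sqrt (x^2+sigma j)) + (-x) * (b j * x / sqrt (x^2+sigma j) ^ 3)))
   by (intros; apply e_P2, good_pos; auto).
 rewrite sumR_lin. ring. Qed.

Lemma P3_SQ x : good x -> x * P3 x = 3 * SS x - 3 * Qs x.
Proof. intros Hg. unfold P3. rewrite <- sumR_scal.
 rewrite (sumR_ext _ _ (fun j => 3 * (b j * sigma j / sqrt (x^2+sigma j) ^ 3) + (-3) * (b j * sigma j ^ 2 / sqrt (x^2+sigma j) ^ 5)))
   by (intros; apply e_P3, good_pos; auto).
 rewrite sumR_lin. unfold SS, Qs. ring. Qed.

Lemma G_dec x y : 0 <= x -> x < y -> good x -> G y < G x.
Proof. intros. unfold G. apply sumR_lt; auto. intros j Hj. apply i_dec; auto. apply good_pos; auto. Qed.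

Lemma S_dec x y : 0 <= x -> x < y -> good x -> SS y <= SS x /\ ((exists j, (j < m)%nat /\ 0 < sigma j) -> SS y < SS x).
Proof. intros. unfold SS. split.
 - apply sumR_le. intros j Hj. apply (i_decS (b j) (sigma j) x y); auto. apply good_pos; auto.
 - intros [j0 [Hj0 Hs0]]. apply (sumR_lt2 _ _ _ j0); auto.
   apply (i_decS (b j0) (sigma j0) x y); auto. apply good_pos; auto.
   intros j Hj. apply (i_decS (b j) (sigma j) x y); auto. apply good_pos; auto. Qed.

Lemma G_bnd X : 1 + sumR m b <= X -> G X < 1.
Proof. intros HX. assert (0 <= sumR m b) by (apply sumR_nonneg; intros; left; auto).
 assert (0 < X) by lra.
 assert (G X <= / X * sumR m b). { rewrite <- sumR_scal. unfold G. apply sumR_le. intros j Hj. apply i_bnd; auto. }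
 assert (/ X * sumR m b < / X * X). { apply Rmult_lt_compat_l. apply Rinv_0_lt_compat; auto. lra. }
 rewrite Rinv_l in H2; lra. Qed.

Lemma G_pos x : good x -> 0 < G x.
Proof. intros Hg. rewrite <- (sumR_zero m). unfold G. apply sumR_lt; auto. intros j Hj.
 unfold Rdiv. apply Rmult_lt_0_compat; auto. apply Rinv_0_lt_compat, sqrt_lt_R0, good_pos; auto. Qed.

Lemma alg A S0 Q c : 0 < A < 1 -> S0 = c * A -> 0 <= c <= 1 -> c * c * A <= Q -> (S0 - Q) * (1 - A) <= (1 - S0) ^ 2.
Proof. intros HA HS Hc HQ. subst S0.
 assert (c * A - Q <= c * A * (1 - c)) by nra.
 assert ((c * A - Q) * (1 - A) <= c * A * (1 - c) * (1 - A)) by (apply Rmult_le_compat_r; lra).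
 assert ((1 - c * A) ^ 2 - c * A * (1 - c) * (1 - A) = (1 - A) ^ 2 + A * ((1 - c) * (2 - A - c))) by ring.
 assert (0 <= (1 - A) ^ 2) by (rewrite <- Rsqr_pow2; apply Rle_0_sqr).
 assert (0 <= A * ((1 - c) * (2 - A - c))) by (apply Rmult_le_pos; [lra| apply Rmult_le_pos; lra]).
 lra. Qed.

Lemma key_ineq l : 0 < l -> P3 l * P1 l <= 3 * P2 l ^ 2.
Proof. intros Hl. assert (Hg : good l) by (left; auto).
 assert (hA := G_pos l Hg).
 assert (hSA : SS l <= G l) by (unfold SS, G; apply sumR_le; intros j Hj; apply i_SG; auto; apply good_pos; auto).
 assert (hS0 : 0 <= SS l) by (unfold SS; apply sumR_nonneg; intros j Hj; apply div_nonneg;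
   [apply Rmult_le_pos; [left; auto| auto] | apply pow_lt, sqrt_lt_R0, good_pos; auto]).
 assert (hQS : Qs l <= SS l) by (unfold SS, Qs; apply sumR_le; intros j Hj; apply i_QS; auto; apply good_pos; auto).
 assert (hcQ : forall c, 2 * c * SS l + (- c ^ 2) * G l <= Qs l).
 { intros c. unfold SS, G. rewrite <- sumR_lin. unfold Qs. apply sumR_le. intros j Hj.
   replace (2 * c * (b j * sigma j / sqrt (l ^ 2 + sigma j) ^ 3)) with ((2 * c) * (b j * sigma j / sqrt (l ^ 2 + sigma j) ^ 3)) by ring.
   apply i_cQ; auto. apply good_pos; auto. }
 assert (e3 := P3_SQ l Hg). rewrite (P1_G l Hg). unfold P2.
 assert (XX : P3 l * (l * (1 - G l)) = 3 * ((SS l - Qs l) * (1 - G l))). { transitivity ((l * P3 l) * (1 - G l)). ring. rewrite e3; ring. } rewrite XX.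
 destruct (Rlt_le_dec (G l) 1) as [HA|HA].
 - set (c := SS l / G l).
   assert (Sc : SS l = c * G l) by (unfold c; field; lra).
   assert (0 <= c <= 1). { split; unfold c.
     apply div_nonneg; lra.
     apply (Rmult_le_reg_r (G l)); auto. unfold Rdiv. rewrite Rmult_assoc, Rinv_l; lra. }
   assert (c * c * G l <= Qs l) by (specialize (hcQ c); nra).
   assert (Hal := alg (G l) (SS l) (Qs l) c ltac:(lra) Sc ltac:(lra) ltac:(lra)). lra.
 - assert (0 <= (1 - SS l) ^ 2) by (rewrite <- Rsqr_pow2; apply Rle_0_sqr).
   assert ((SS l - Qs l) * (1 - G l) <= 0) by (apply Rmult_le_0_l; lra). lra. Qed.

Lemma dnG x : good x -> is_derive (fun y => - G y) x (integrand m b sigma x).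
Proof. intros Hg. replace (integrand m b sigma x) with (- (- integrand m b sigma x)) by ring.
 apply (is_derive_opp G). apply dG; auto. Qed.

Lemma RInt_G a c : (forall x, Rmin a c <= x <= Rmax a c -> good x) -> RInt (integrand m b sigma) a c = G a - G c.
Proof. intros H. apply is_RInt_unique.
 replace (G a - G c) with (minus (- G c) (- G a)) by (unfold minus, plus, opp; simpl; ring).
 apply (is_RInt_derive (fun x => - G x)).
 intros; apply dnG; auto. intros; apply cont_int; auto. Qed.

Lemma ex_d1G a : good a -> ex_derive (fun y => 1 - G y) a.
Proof. intros Hg. exists (0 - - integrand m b sigma a).
 apply (is_derive_minus (fun _ => 1) G). auto_derive; reflexivity. apply dG; auto. Qed.

Lemma no_crit : (~ exists l0, 0 < l0 /\ phi1 m b sigma l0 = 0) -> forall x, 0 < x -> G x < 1.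
Proof. intros H x Hx. destruct (Rlt_le_dec (G x) 1) as [|Hge]; auto. exfalso.
 destruct Hge as [Hgt|Heq].
 - set (X := Rmax (x+1) (1 + sumR m b)).
   assert (GX : G X < 1) by (apply G_bnd; unfold X; apply Rmax_r).
   assert (xX : x < X) by (unfold X; generalize (Rmax_l (x+1) (1 + sumR m b)); lra).
   destruct (Ranalysis5.IVT_interv (fun y => 1 - G y) x X) as [z [Hz Hz0]].
   + intros a Ha. apply (proj2 (continuity_pt_filterlim (fun y => 1 - G y) a)).
     apply (@ex_derive_continuous R_AbsRing R_NormedModule (fun y => 1 - G y) a). apply ex_d1G. left; lra.
   + auto.
   + lra.
   + lra.
   + apply H. exists z. split; [lra|]. rewrite phi1_eq, P1_G by (left; lra). simpl in Hz0. rewrite Hz0. ring.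
 - apply H. exists x. split; auto. rewrite phi1_eq, P1_G by (left; lra). rewrite <- Heq. ring. Qed.

Lemma allpos : (forall x, 0 < x -> G x < 1) -> forall j, (j < m)%nat -> 0 < sigma j.
Proof. intros H j Hj. destruct (hs j Hj) as [|E0]; auto. exfalso.
 assert (Hbj := hb j Hj). set (x := b j / 2).
 assert (Hx : 0 < x) by (unfold x; lra).
 assert (b j / sqrt (x^2 + sigma j) <= G x).
 { unfold G. apply (sumR_ge_term m (fun j => b j / sqrt (x ^ 2 + sigma j)) j); auto.
   intros k Hk. apply div_nonneg. left; auto. apply sqrt_lt_R0. generalize (hs k Hk) (pow_lt x 2 Hx); lra. }
 rewrite <- E0, Rplus_0_r, sqrt_pow2 in H0 by lra.
 replace (b j / x) with 2 in H0 by (unfold x; field; lra).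
 specialize (H x Hx). lra. Qed.

Lemma G0 : (forall j, (j < m)%nat -> 0 < sigma j) -> (forall x, 0 < x -> G x < 1) -> G 0 <= 1.
Proof. intros Hp H. destruct (Rle_lt_dec (G 0) 1) as [|Hgt]; auto. exfalso.
 assert (Hl : locally (G 0) (fun z => 1 < z)).
 { exists (mkposreal (G 0 - 1) ltac:(lra)). intros z Hz. apply ball_R in Hz. simpl in Hz.
   apply Rabs_lt_between in Hz. unfold minus, plus, opp in Hz; simpl in Hz. lra. }
 assert (Hc : continuous G 0).
 { apply (@ex_derive_continuous R_AbsRing R_NormedModule). exists (- integrand m b sigma 0). apply dG. right; auto. }
 specialize (Hc _ Hl). destruct Hc as [eps He].
 assert (Hb : ball 0 eps (eps / 2)).
 { apply ball_R. destruct eps as [e He']. simpl. rewrite Rabs_right; lra. }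
 specialize (He _ Hb). simpl in He.
 assert (Hp2 : 0 < eps / 2) by (destruct eps; simpl; lra).
 specialize (H _ Hp2). lra. Qed.

Lemma int_nonneg x : 0 <= x -> good x -> 0 <= integrand m b sigma x.
Proof. intros Hx Hg. unfold integrand. apply sumR_nonneg. intros j Hj. apply i_int; auto. apply good_pos; auto. Qed.

Lemma phi1_G x : 0 < x -> phi1 m b sigma x = x * (1 - G x).
Proof. intros Hx. rewrite phi1_eq, P1_G; auto; left; auto. Qed.

Lemma Gone x : 0 < x -> phi1 m b sigma x = 0 -> G x = 1.
Proof. intros Hx E. rewrite phi1_G in E; auto. apply Rmult_integral in E. destruct E; lra. Qed.

Lemma main_sec :
  ((forall x y, 0 < x -> 0 < y ->
      phi1 m b sigma x = 0 -> phi1 m b sigma y = 0 -> x = y) /\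
   (forall l0, 0 < l0 -> phi1 m b sigma l0 = 0 ->
      (forall l, l0 < l -> 0 < phi1 m b sigma l) /\
      (forall l, 0 < l < l0 -> phi1 m b sigma l < 0) /\
      (forall l, l0 < l -> 0 < phi2 m b sigma l) /\
      (forall x y, 0 < x < l0 -> 0 < y < l0 ->
         phi2 m b sigma x = 0 -> phi2 m b sigma y = 0 -> x = y)) /\
   ((~ exists l0, 0 < l0 /\ phi1 m b sigma l0 = 0) ->
      forall l, 0 <= l -> 0 <= phi2 m b sigma l)) /\
  (forall l, 0 < l -> phi1 m b sigma l <> 0 ->
     Derive (fun x => phi2 m b sigma x / (phi1 m b sigma x) ^ 3) l <= 0) /\
  ((forall l0, 0 < l0 -> phi1 m b sigma l0 = 0 ->
      forall l, 0 < l ->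
        phi1 m b sigma l = l * RInt (integrand m b sigma) l0 l) /\
   ((~ exists l0, 0 < l0 /\ phi1 m b sigma l0 = 0) ->
      forall l, 0 < l ->
        l * RInt (integrand m b sigma) 0 l <= phi1 m b sigma l)).
Proof.
 split; [split; [|split] | split; [|split]].
 - intros x y Hx Hy Ex Ey. apply Gone in Ex; auto. apply Gone in Ey; auto.
   destruct (Rtotal_order x y) as [H|[H|H]]; auto.
   + assert (G y < G x) by (apply G_dec; auto; [lra| left; auto]). lra.
   + assert (G x < G y) by (apply G_dec; auto; [lra| left; auto]). lra.
 - intros l0 Hl0 E0. assert (G0 : G l0 = 1) by (apply Gone; auto).
   split; [|split; [|split]].
   + intros l Hl. rewrite phi1_G by lra.
     assert (G l < G l0) by (apply G_dec; auto; [lra| left; auto]).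
     apply Rmult_lt_0_compat; lra.
   + intros l Hl. rewrite phi1_G by lra.
     assert (G l0 < G l) by (apply G_dec; [lra| lra| left; lra]).
     nra.
   + intros l Hl. rewrite phi2_eq, P2_G by (left; lra).
     assert (G l < G l0) by (apply G_dec; auto; [lra| left; auto]).
     assert (0 <= integrand m b sigma l) by (apply int_nonneg; [lra| left; lra]).
     nra.
   + intros x y Hx Hy Ex Ey. rewrite phi2_eq in Ex, Ey by (left; lra). unfold P2 in Ex, Ey.
     destruct (classic (exists j, (j < m)%nat /\ 0 < sigma j)) as [Hex|Hnex].
     * destruct (Rtotal_order x y) as [H|[H|H]]; auto.
       -- assert (SS y < SS x) by (apply (S_dec x y); auto; [lra| left; lra]). lra.
       -- assert (SS x < SS y) by (apply (S_dec y x); auto; [lra| left; lra]). lra.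
     * exfalso. assert (SS x = 0).
       { unfold SS. rewrite <- (sumR_zero m). apply sumR_ext. intros j Hj.
         destruct (hs j Hj) as [Hp|Hz]. exfalso; apply Hnex; exists j; auto.
         rewrite <- Hz. unfold Rdiv. ring. }
       lra.
 - intros Hn l Hl. assert (Hlt := no_crit Hn). assert (Hp := allpos Hlt).
   assert (g0 := G0 Hp Hlt). rewrite phi2_eq, P2_G by (right; auto).
   assert (0 <= integrand m b sigma l) by (apply int_nonneg; auto; right; auto).
   assert (G l <= 1). { destruct Hl as [Hl|Hl]. left; apply Hlt; auto. subst; auto. }
   assert (0 <= l * integrand m b sigma l) by (apply Rmult_le_pos; auto). lra.
 - intros l Hl Hne.
   rewrite (Derive_ext_loc _ (fun x => P2 x / P1 x ^ 3)).
   2:{ apply (filter_imp good). intros y Hy. rewrite phi1_eq, phi2_eq; auto. apply good_loc; left; auto. }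
   assert (Hg : good l) by (left; auto).
   rewrite phi1_eq in Hne by auto.
   assert (Hne3 : P1 l ^ 3 <> 0) by (apply pow_nonzero; auto).
   erewrite is_derive_unique.
   2:{ apply (is_derive_div P2 (fun x => P1 x ^ 3) l _ _ (dP2 l Hg) (is_derive_pow P1 3 l _ (dP1 l Hg)) Hne3). }
   simpl pred. replace (INR 3) with 3 by (simpl; ring).
   assert (K := key_ineq l Hl).
   assert (0 < P1 l ^ 2) by (apply pow2_gt_0; auto).
   set (N := P2 l * (3 * P2 l * P1 l ^ 2) - P3 l * P1 l ^ 3).
   assert (EN : N = P1 l ^ 2 * (3 * P2 l ^ 2 - P3 l * P1 l)) by (unfold N; ring).
   assert (0 <= N) by (rewrite EN; apply Rmult_le_pos; lra).
   assert (0 < (P1 l ^ 3) ^ 2) by (apply pow2_gt_0; auto).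
   assert (0 <= N / (P1 l ^ 3) ^ 2) by (apply div_nonneg; auto).
   replace ((P3 l * P1 l ^ 3 - P2 l * (3 * P2 l * P1 l ^ 2)) / (P1 l ^ 3) ^ 2) with (- (N / (P1 l ^ 3) ^ 2)) by (unfold N; field; auto).
   lra.
 - intros l0 Hl0 E0 l Hl. assert (G0 : G l0 = 1) by (apply Gone; auto).
   rewrite RInt_G. rewrite phi1_G by auto. rewrite G0. ring.
   intros x Hx. left. assert (0 < Rmin l0 l) by (apply Rmin_glb_lt; auto). lra.
 - intros Hn l Hl. assert (Hlt := no_crit Hn). assert (Hp := allpos Hlt).
   assert (g0 := G0 Hp Hlt).
   rewrite RInt_G by (intros; right; auto). rewrite phi1_G by auto.
   apply Rmult_le_compat_l; lra.
Qed.
End S.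

Theorem lemma6p5 (m : nat) (b sigma : nat -> R)
  (hm : (1 <= m)%nat)
  (hb : forall j, (j < m)%nat -> 0 < b j)
  (hs : forall j, (j < m)%nat -> 0 <= sigma j) :
  (* (1) *)
  ((forall x y, 0 < x -> 0 < y ->
      phi1 m b sigma x = 0 -> phi1 m b sigma y = 0 -> x = y) /\
   (forall l0, 0 < l0 -> phi1 m b sigma l0 = 0 ->
      (forall l, l0 < l -> 0 < phi1 m b sigma l) /\
      (forall l, 0 < l < l0 -> phi1 m b sigma l < 0) /\
      (forall l, l0 < l -> 0 < phi2 m b sigma l) /\
      (forall x y, 0 < x < l0 -> 0 < y < l0 ->
         phi2 m b sigma x = 0 -> phi2 m b sigma y = 0 -> x = y)) /\
   ((~ exists l0, 0 < l0 /\ phi1 m b sigma l0 = 0) ->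
      forall l, 0 <= l -> 0 <= phi2 m b sigma l)) /\
  (* (2) *)
  (forall l, 0 < l -> phi1 m b sigma l <> 0 ->
     Derive (fun x => phi2 m b sigma x / (phi1 m b sigma x) ^ 3) l <= 0) /\
  (* (3) *)
  ((forall l0, 0 < l0 -> phi1 m b sigma l0 = 0 ->
      forall l, 0 < l ->
        phi1 m b sigma l = l * RInt (integrand m b sigma) l0 l) /\
   ((~ exists l0, 0 < l0 /\ phi1 m b sigma l0 = 0) ->
      forall l, 0 < l ->
        l * RInt (integrand m b sigma) 0 l <= phi1 m b sigma l)).
Proof.
  exact (main_sec m b sigma hm hb hs).
Qed.
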